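(* Let $f:\mathbb R^n\to\mathbb R$ be convex, differentiable and $L$-Lipschitz smooth, $g:\mathbb R^n\to\mathbb R\cup\{+\infty\}$ proper, closed and convex, $F=f+g$, and assume $F$ has a minimizer $\bar x$. Let $(B_k)_{k\ge0}\subseteq(0,\infty)$, $(\rho_k)_{k\ge0}\subseteq[0,\infty)$, $L_k=B_k+\rho_k$, and assume there are constants $L_{\max}\ge L_{\min}>0$ with $L_k\in[L_{\min},L_{\max}]$ for all $k$. Let $\alpha_0=1$ and, for $k\ge1$, let $\alpha_k\in(0,1]$ satisfy $1-\alpha_k=\frac{\alpha_k^2L_k}{\alpha_{k-1}^2L_{k-1}}$. Define $\beta_0=1$, $\beta_k=\prod_{i=1}^k\max\big(1-\alpha_i,\frac{\alpha_i^2L_i}{\alpha_{i-1}^2L_{i-1}}\big)$ for $k\ge1$, fix $\mathcal E_0>0$ and $p>1$, and let $\mathcal R_k(p)=\mathcal E_0\big(1+\sum_{l=1}^kl^{-p}\big)$. Given $x_{-1},x^\circ_{-1}\in\mathbb R^n$, let $(y_k,x_k,x^\circ_k)_{k\ge0}$ and $(\epsilon_k)_{k\ge0}$ satisfy for all $k\ge0$: $y_k=\alpha_kx^\circ_{k-1}+(1-\alpha_k)x_{k-1}$; $x_k\approx_{\epsilon_k}T_{L_k}(y_k)$; $D_f(x_k,y_k)\le\frac{B_k}2\|x_k-y_k\|^2$; $x^\circ_k=x_{k-1}+\alpha_k^{-1}(x_k-x_{k-1})$; where $\epsilon_0=\mathcal E_0$ and $\epsilon_k=\mathcal E_0\beta_kk^{-p}+\frac{\rho_k}2\|x_k-y_k\|^2$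 for $k\ge1$. Then for all $k\ge0$, $$F(x_k)-F(\bar x)+\frac{\alpha_k^2L_k}2\|\bar x-x^\circ_k\|^2\le\Big(1+\frac{k\sqrt{L_0}}{2\sqrt{L_{\max}}}\Big)^{-2}\Big(\frac{L_0}2\|\bar x-x^\circ_{-1}\|^2+\mathcal R_k(p)\Big).$$ In particular, since $\mathcal R_k(p)\le\mathcal E_0\big(1+\sum_{l\ge1}l^{-p}\big)<\infty$, $F(x_k)-F(\bar x)=\mathcal O(1/k^2)$.
   Context: $D_f(u,w)=f(u)-f(w)-\langle\nabla f(w),u-w\rangle$; $L$-Lipschitz smooth means $D_f(u,w)\le\frac L2\|u-w\|^2$ for all $u,w$. For proper $h$, $\epsilon\ge0$: $\partial_\epsilon h(\bar x)=\{v:\langle v,u-\bar x\rangle\le h(u)-h(\bar x)+\epsilon\ \forall u\}$ for $\bar x\in\operatorname{dom}h$, $\emptyset$ otherwise. $\tilde x\approx_\epsilon T_\rho(x)$ means $\mathbf 0\in\nabla f(x)-\rho(x-\tilde x)+\partial_\epsilon g(\tilde x)$. *)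

(* Defs.v *)
From HB Require Import structures.
From mathcomp Require Import all_boot all_order all_algebra.
From mathcomp Require Import reals constructive_ereal ereal exp.
Set Implicit Arguments. Unset Strict Implicit. Unset Printing Implicit Defensive.
Import Order.TTheory GRing.Theory Num.Theory.
Local Open Scope ring_scope.

Section Defs.
Variables (R : realType) (n : nat).
Local Notation V := 'rV[R]_n.

Definition inner (u v : V) : R := (u *m v^T) 0 0.
Definition enorm (u : V) : R := Num.sqrt (inner u u).

Definition has_gradient (f : V -> R) (gf : V -> V) : Prop :=
  forall x : V, forall eps : R, 0 < eps -> exists2 delta : R, 0 < delta &
    forall h : V, enorm h < delta ->
      `|f (x + h) - f x - inner (gf x) h| <= eps * enorm h.

Definition convex_fun (f : V -> R) : Prop :=
  forall (x y : V) (l : R), 0 <= l <= 1 ->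
    f (l *: x + (1 - l) *: y) <= l * f x + (1 - l) * f y.

Definition bregman (f : V -> R) (gf : V -> V) (u w : V) : R :=
  f u - f w - inner (gf w) (u - w).

Definition lipschitz_smooth (f : V -> R) (gf : V -> V) (L : R) : Prop :=
  forall u w : V, bregman f gf u w <= L / 2 * enorm (u - w) ^+ 2.

Definition proper_fun (g : V -> \bar R) : Prop :=
  (exists x : V, g x < +oo)%E /\ (forall x : V, -oo < g x)%E.

(* closed = lower semicontinuous *)
Definition closed_fun (g : V -> \bar R) : Prop :=
  forall (x : V) (t : R), (t%:E < g x)%E -> exists2 delta : R, 0 < delta &
    forall y : V, enorm (y - x) < delta -> (t%:E < g y)%E.

Definition convex_efun (g : V -> \bar R) : Prop :=
  forall (x y : V) (l : R), 0 < l < 1 ->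
    (g (l *: x + (1 - l) *: y)%R <= l%:E * g x + (1 - l)%R%:E * g y)%E.

Definition eps_subdiff (g : V -> \bar R) (eps : R) (xb v : V) : Prop :=
  (g xb < +oo)%E /\
  forall u : V, ((inner v (u - xb))%:E <= g u - g xb + eps%:E)%E.

(* xt \approx_eps T_rho(x) :  0 \in gf x - rho (x - xt) + \partial_eps g (xt) *)
Definition approx_prox (gf : V -> V) (g : V -> \bar R) (rho eps : R) (x xt : V) :
  Prop := exists v : V, eps_subdiff g eps xt v /\ gf x - rho *: (x - xt) + v = 0.

End Defs.

Definition beta_seq (R : realType) (alpha L : nat -> R) (k : nat) : R :=
  \prod_(1 <= i < k.+1)
     Num.max (1 - alpha i) (alpha i ^+ 2 * L i / (alpha i.-1 ^+ 2 * L i.-1)).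

Definition Rk (R : realType) (E0 p : R) (k : nat) : R :=
  E0 * (1 + \sum_(1 <= l < k.+1) powR (l%:R) (- p)).

(* Main.v *)
Require Import Defs.
From HB Require Import structures.
From mathcomp Require Import all_boot all_order all_algebra.
From mathcomp Require Import reals constructive_ereal ereal exp.
From mathcomp Require Import ring lra.
Import Order.TTheory GRing.Theory Num.Theory.
Local Open Scope ring_scope.
Set Implicit Arguments. Unset Strict Implicit.
Section Inner.
Variables (R : realType) (n : nat).
Implicit Types (u v w : 'rV[R]_n).

Lemma innerE u v : inner u v = \sum_j u 0 j * v 0 j.
Proof. by rewrite /inner !mxE; apply: eq_bigr => j _; rewrite !mxE. Qed.

Lemma innerC u v : inner u v = inner v u.
Proof. by rewrite !innerE; apply: eq_bigr => j _; rewrite mulrC. Qed.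

Lemma innerDl u v w : inner (u + v) w = inner u w + inner v w.
Proof. by rewrite !innerE -big_split; apply: eq_bigr => j _; rewrite !mxE mulrDl. Qed.

Lemma innerZl a u w : inner (a *: u) w = a * inner u w.
Proof. by rewrite !innerE mulr_sumr; apply: eq_bigr => j _; rewrite !mxE mulrA. Qed.

Lemma innerNl u w : inner (- u) w = - inner u w.
Proof. by rewrite -scaleN1r innerZl mulN1r. Qed.

Lemma innerBl u v w : inner (u - v) w = inner u w - inner v w.
Proof. by rewrite innerDl innerNl. Qed.

Lemma innerDr u v w : inner w (u + v) = inner w u + inner w v.
Proof. by rewrite innerC innerDl !(innerC w). Qed.

Lemma innerZr a u w : inner w (a *: u) = a * inner w u.
Proof. by rewrite innerC innerZl innerC. Qed.

Lemma innerBr u v w : inner w (u - v) = inner w u - inner w v.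
Proof. by rewrite innerC innerBl !(innerC w). Qed.

Lemma inner_ge0 u : 0 <= inner u u.
Proof. by rewrite innerE; apply: sumr_ge0 => j _; rewrite -expr2 sqr_ge0. Qed.

Lemma enorm_sq u : enorm u ^+ 2 = inner u u.
Proof. by rewrite /enorm sqr_sqrtr // inner_ge0. Qed.

Lemma enorm_ge0 u : 0 <= enorm u.
Proof. exact: sqrtr_ge0. Qed.

Lemma enormZ a u : enorm (a *: u) = `|a| * enorm u.
Proof. by rewrite /enorm innerZl innerZr mulrA -expr2 sqrtrM ?sqr_ge0 // sqrtr_sqr. Qed.

Lemma enorm_sym u v : enorm (u - v) = enorm (v - u).
Proof. by rewrite -opprB -scaleN1r enormZ normrN normr1 mul1r. Qed.

Lemma enormZ2 a u : enorm (a *: u) ^+ 2 = a ^+ 2 * enorm u ^+ 2.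
Proof. by rewrite enormZ exprMn real_normK // num_real. Qed.

Lemma enormD2 u v : enorm (u + v) ^+ 2 = enorm u ^+ 2 + 2 * inner u v + enorm v ^+ 2.
Proof.
rewrite !enorm_sq innerDl !innerDr (innerC v u); ring.
Qed.

End Inner.
Unset Implicit Arguments.
Lemma le_eps_ge0 (R : realType) (a c : R) : 0 <= c ->
  (forall e, 0 < e -> a <= e * c) -> a <= 0.
Proof.
move=> c0 H; case: (lerP a 0) => // a0.
have [c00|cpos] := eqVneq c 0.
  by have := H 1 ltr01; rewrite c00 mulr0 => /(lt_le_trans a0); rewrite ltxx.
have cp : 0 < c by rewrite lt_def cpos c0.
have := H (a / (2 * c)) (divr_gt0 a0 (mulr_gt0 (ltr0Sn _ 1) cp)).
have -> : a / (2 * c) * c = a / 2 by field; rewrite cpos.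
lra.
Qed.

Lemma grad_ineq (R : realType) (n : nat) (f : 'rV[R]_n -> R) gf :
  convex_fun f -> has_gradient f gf ->
  forall u y, f y + inner (gf y) (u - y) <= f u.
Proof.
move=> cf hg u y.
set h := u - y.
suff : inner (gf y) h - (f u - f y) <= 0 by lra.
apply: (@le_eps_ge0 _ _ (enorm h) (enorm_ge0 h)) => e e0.
have [d d0 Hd] := hg y e e0.
have hn := enorm_ge0 h.
set t := d / (2 * (enorm h + d)).
have t0 : 0 < t by apply: divr_gt0 => //; apply: mulr_gt0 => //; lra.
have t1 : t <= 1.
  rewrite /t ler_pdivrMr; last by apply: mulr_gt0 => //; lra.
  lra.
have th : enorm (t *: h) < d.
  rewrite enormZ (ger0_norm (ltW t0)) /t.
  rewrite mulrAC ltr_pdivrMr; last by apply: mulr_gt0 => //; lra.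
  nra.
have := Hd _ th.
have := cf u y t; rewrite (ltW t0) t1 => /(_ isT).
have -> : t *: u + (1 - t) *: y = y + t *: h.
  by apply/rowP => j; rewrite !mxE; ring.
rewrite innerZr enormZ (ger0_norm (ltW t0)) ler_norml => Hc /andP [Ha _].
have : t * (inner (gf y) h - (f u - f y)) <= t * (e * enorm h) by clearbody t; lra.
by rewrite ler_pM2l.
Qed.
Section Beta.
Variables (R : realType) (alpha L : nat -> R) (Lmax : R).
Hypothesis a0 : alpha 0%N = 1.
Hypothesis apos : forall k, 0 < alpha k.
Hypothesis Lpos : forall k, 0 < L k.
Hypothesis LM : forall k, L k <= Lmax.
Hypothesis rec : forall k, 1 - alpha k.+1 = alpha k.+1 ^+ 2 * L k.+1 / (alpha k ^+ 2 * L k).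

Lemma beta_eq k : beta_seq alpha L k = alpha k ^+ 2 * L k / L 0%N.
Proof.
elim: k => [|k IH].
  by rewrite /beta_seq big_geq // a0 expr1n mul1r divff // gt_eqF.
rewrite /beta_seq big_nat_recr //= -/(beta_seq alpha L k) IH -rec maxxx rec.
have := apos k; have := Lpos k; have := Lpos 0%N => h1 h2 h3.
by field; rewrite !gt_eqF.
Qed.

Lemma rate k : 1 + k%:R * Num.sqrt (L 0%N) / (2 * Num.sqrt Lmax)
   <= Num.sqrt (L 0%N) / (alpha k * Num.sqrt (L k)).
Proof.
have s0 : 0 < Num.sqrt (L 0%N) by rewrite sqrtr_gt0.
have M0 : 0 < Num.sqrt Lmax by rewrite sqrtr_gt0; exact: lt_le_trans (Lpos 0) (LM 0).
elim: k => [|k IH].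
  by rewrite mul0r mul0r addr0 a0 mul1r divff // gt_eqF.
set r0 := alpha k * Num.sqrt (L k) in IH *.
set r := alpha k.+1 * Num.sqrt (L k.+1).
set a := alpha k.+1.
have r0p : 0 < r0 by rewrite mulr_gt0 // sqrtr_gt0.
have rp : 0 < r by rewrite mulr_gt0 // sqrtr_gt0.
have hr : r ^+ 2 = (1 - a) * r0 ^+ 2.
  rewrite /a rec /r /r0 !exprMn !sqr_sqrtr ?ltW //.
  have := apos k; have := Lpos k => h1 h2.
  by field; rewrite !gt_eqF.
have ha : 0 < a by exact: apos.
have rr0 : r <= r0 by nra.
have h1 : a * r0 <= 2 * (r0 - r).
  have : a * r0 * r0 <= 2 * (r0 - r) * r0 by nra.
  by rewrite ler_pM2r.
have sL : Num.sqrt (L k.+1) <= Num.sqrt Lmax by rewrite ler_sqrt ?LM // ltW // (lt_le_trans (Lpos 0) (LM 0)).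
have h2 : r * r0 <= 2 * Num.sqrt Lmax * (r0 - r).
  have h3 : r * r0 <= Num.sqrt Lmax * (a * r0).
    have -> : r * r0 = a * r0 * Num.sqrt (L k.+1) by rewrite /r -/a; ring.
    have -> : Num.sqrt Lmax * (a * r0) = a * r0 * Num.sqrt Lmax by ring.
    by rewrite ler_pM2l // mulr_gt0.
  have : Num.sqrt Lmax * (a * r0) <= Num.sqrt Lmax * (2 * (r0 - r)) by rewrite ler_pM2l.
  lra.
have key : 1 / (2 * Num.sqrt Lmax) <= 1 / r - 1 / r0.
  rewrite ler_pdivrMr ?mulr_gt0 //.
  have -> : (1 / r - 1 / r0) * (2 * Num.sqrt Lmax) = (2 * Num.sqrt Lmax * (r0 - r)) / (r * r0).
    by field; rewrite !gt_eqF.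
  rewrite ler_pdivlMr; last exact: mulr_gt0. apply: le_trans h2. by rewrite mul1r.
have -> : (k.+1)%:R = k%:R + 1 :> R by rewrite -addn1 natrD.
have e1 : (k%:R + 1) * Num.sqrt (L 0%N) / (2 * Num.sqrt Lmax) =
   k%:R * Num.sqrt (L 0%N) / (2 * Num.sqrt Lmax) + Num.sqrt (L 0%N) * (1 / (2 * Num.sqrt Lmax)).
  by field; rewrite gt_eqF.
rewrite e1 -/r.
have e2 : Num.sqrt (L 0%N) / r = Num.sqrt (L 0%N) / r0 + Num.sqrt (L 0%N) * (1 / r - 1 / r0).
  by field; rewrite !gt_eqF.
rewrite e2.
have : Num.sqrt (L 0%N) * (1 / (2 * Num.sqrt Lmax)) <= Num.sqrt (L 0%N) * (1 / r - 1 / r0).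
  by rewrite ler_pM2l.
lra.
Qed.

Lemma beta_bound k : alpha k ^+ 2 * L k / L 0%N <=
   (1 + k%:R * Num.sqrt (L 0%N) / (2 * Num.sqrt Lmax)) ^- 2.
Proof.
have := rate k.
set c := 1 + _.
set D := _ / _.
move=> cD.
have c1 : 1 <= c.
  rewrite /c lerDl; apply: divr_ge0; first by apply: mulr_ge0 => //; exact: sqrtr_ge0.
  by apply: mulr_ge0 => //; exact: sqrtr_ge0.
have cD2 : c ^+ 2 <= D ^+ 2 by nra.
have -> : alpha k ^+ 2 * L k / L 0%N = (D ^+ 2)^-1.
  rewrite /D expr_div_n !exprMn !sqr_sqrtr ?ltW //.
  have := apos k; have := Lpos k; have := Lpos 0%N => h1 h2 h3.
  by field; rewrite !gt_eqF.
rewrite lef_pV2 // ?posrE; first by apply: exprn_gt0; lra.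
by apply: exprn_gt0; lra.
Qed.
End Beta.
Theorem theorem3p9 (R : realType) (n : nat)
  (f : 'rV[R]_n -> R) (gf : 'rV[R]_n -> 'rV[R]_n) (Lf : R)
  (g : 'rV[R]_n -> \bar R) (xbar : 'rV[R]_n)
  (B rho alpha eps : nat -> R) (Lmin Lmax E0 p : R)
  (x_m1 xo_m1 : 'rV[R]_n) (y x xo : nat -> 'rV[R]_n) :
  let L k := B k + rho k in
  let F u := ((f u)%:E + g u)%E in
  convex_fun f -> has_gradient f gf -> lipschitz_smooth f gf Lf ->
  proper_fun g -> closed_fun g -> convex_efun g ->
  (forall u, (F xbar <= F u)%E) ->
  (forall k, 0 < B k) -> (forall k, 0 <= rho k) ->
  0 < Lmin -> Lmin <= Lmax -> (forall k, Lmin <= L k <= Lmax) ->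
  alpha 0%N = 1 ->
  (forall k, 0 < alpha k.+1 <= 1) ->
  (forall k, 1 - alpha k.+1 = alpha k.+1 ^+ 2 * L k.+1 / (alpha k ^+ 2 * L k)) ->
  0 < E0 -> 1 < p ->
  (* iteration k = 0 (x_{-1}, xo_{-1} given) *)
  y 0%N = alpha 0%N *: xo_m1 + (1 - alpha 0%N) *: x_m1 ->
  xo 0%N = x_m1 + (alpha 0%N)^-1 *: (x 0%N - x_m1) ->
  (* iterations k >= 1 *)
  (forall k, y k.+1 = alpha k.+1 *: xo k + (1 - alpha k.+1) *: x k) ->
  (forall k, xo k.+1 = x k + (alpha k.+1)^-1 *: (x k.+1 - x k)) ->
  (* common conditions for all k >= 0 *)
  (forall k, approx_prox gf g (L k) (eps k) (y k) (x k)) ->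
  (forall k, bregman f gf (x k) (y k) <= B k / 2 * enorm (x k - y k) ^+ 2) ->
  eps 0%N = E0 ->
  (forall k, eps k.+1 = E0 * beta_seq alpha L k.+1 * powR (k.+1)%:R (- p)
                        + rho k.+1 / 2 * enorm (x k.+1 - y k.+1) ^+ 2) ->
  forall k : nat,
    (F (x k) - F xbar + (alpha k ^+ 2 * L k / 2 * enorm (xbar - xo k) ^+ 2)%:E
     <= ((1 + k%:R * Num.sqrt (L 0%N) / (2 * Num.sqrt Lmax)) ^- 2
         * (L 0%N / 2 * enorm (xbar - xo_m1) ^+ 2 + Rk E0 p k))%:E)%E.
Proof.
move=> L F cf hg _ pg _ cg Fmin Bpos rpos Lmin0 LminM Lb a0 aS rec E00 _ y0 xo0 yS xoS
  hprox hbreg eps0 epsS k.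
have Lpos j : 0 < L j by apply: lt_le_trans Lmin0 _; case/andP: (Lb j).
have LM j : L j <= Lmax by case/andP: (Lb j).
have apos j : 0 < alpha j by case: j => [|j]; [rewrite a0 | case/andP: (aS j)].
have alt1 j : alpha j.+1 < 1.
  have : 0 < 1 - alpha j.+1.
    rewrite rec; apply: divr_gt0; first by apply: mulr_gt0 => //; apply: exprn_gt0.
    by apply: mulr_gt0 => //; apply: exprn_gt0.
  lra.
have gfin u : (g u < +oo)%E -> g u = (fine (g u))%:E.
  by have := pg.2 u; case: (g u).
have gx j : (g (x j) < +oo)%E by have [v [[H _] _]] := hprox j.
have gxbar : (g xbar < +oo)%E.
  have [u0 hu0] := pg.1.
  have := Fmin u0; rewrite /F (gfin _ hu0).
  by case: (g xbar) => [r| |] //= _; rewrite ltry.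
set gr := fun u => fine (g u).
have key j u : (g u < +oo)%E ->
  f (x j) + gr (x j) <= f u + gr u + L j * inner (y j - x j) (x j - u)
     + B j / 2 * enorm (x j - y j) ^+ 2 + eps j.
  move=> gu.
  have [v [[_ Hv] Ev]] := hprox j.
  have := Hv u; rewrite (gfin u gu) (gfin _ (gx j)) -EFinB -EFinD lee_fin => Hv'.
  have Hg := @grad_ineq _ _ f gf cf hg u (y j).
  have Hb := hbreg j; rewrite /bregman in Hb.
  have vE : v = L j *: (y j - x j) - gf (y j).
    apply/rowP => i; have := congr1 (fun M : 'rV[R]_n => M 0 i) Ev; rewrite !mxE => E; lra.
  rewrite vE innerBl innerZl in Hv'.
  move: Hv' Hg Hb; rewrite /gr !innerBr; lra.
pose P j := f (x j) + gr (x j) - (f xbar + gr xbar)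
   + alpha j ^+ 2 * L j / 2 * enorm (xbar - xo j) ^+ 2.
pose C := L 0%N / 2 * enorm (xbar - xo_m1) ^+ 2.
have HP : forall j, P j <= alpha j ^+ 2 * L j / L 0%N * (C + Rk E0 p j).
  elim=> [|j IH].
    have ey : y 0%N = xo_m1 by rewrite y0 a0 scale1r subrr scale0r addr0.
    have exo : xo 0%N = x 0%N by rewrite xo0 a0 invr1 scale1r; apply/rowP => i; rewrite !mxE; ring.
    have hk := key 0%N xbar gxbar.
    rewrite eps0 in hk.
    have hR : Rk E0 p 0 = E0 by rewrite /Rk big_geq // addr0 mulr1.
    rewrite /P /C hR a0 expr1n mul1r divff ?gt_eqF // mul1r exo.
    have e1 : xbar - xo_m1 = (-1) *: ((y 0%N - x 0%N) + (x 0%N - xbar)).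
      by rewrite ey; apply/rowP => i; rewrite !mxE; ring.
    rewrite (enorm_sym xbar) e1 enormZ normrN normr1 mul1r (enormD2 (y 0%N - x 0%N)); rewrite (enorm_sym (x 0%N)) in hk.
    have hB : B 0%N / 2 * enorm (y 0%N - x 0%N) ^+ 2 <= L 0%N / 2 * enorm (y 0%N - x 0%N) ^+ 2.
      apply: ler_wpM2r; first exact: exprn_ge0 (enorm_ge0 _).
      by rewrite ler_pM2r // /L lerDl.
    lra.
  set a := alpha j.+1.
  have a0' : 0 < a by exact: apos.
  have a1 : a < 1 by exact: alt1.
  set u := a *: xbar + (1 - a) *: x j.
  have cgu := cg xbar (x j) a.
  rewrite a0' a1 /= -/u in cgu; have {}cgu := cgu isT.
  rewrite (gfin _ gxbar) (gfin _ (gx j)) -!EFinM -EFinD in cgu.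
  have gu : (g u < +oo)%E by apply: le_lt_trans cgu _; rewrite ltry.
  rewrite (gfin _ gu) lee_fin -/(gr u) -/(gr xbar) -/(gr (x j)) in cgu.
  have fu := cf xbar (x j) a; rewrite (ltW a0') (ltW a1) /= -/u in fu; have {}fu := fu isT.
  have hk := key j.+1 u gu.
  rewrite epsS beta_eq // in hk.
  have e1 : y j.+1 - u = a *: (xo j - xbar).
    by rewrite yS -/a /u; apply/rowP => i; rewrite !mxE; ring.
  have e2 : x j.+1 - u = a *: (xo j.+1 - xbar).
    rewrite xoS -/a /u; apply/rowP => i; rewrite !mxE; field.
    by rewrite gt_eqF.
  have e3 : y j.+1 - u = (y j.+1 - x j.+1) + (x j.+1 - u).
    by rewrite addrA subrK.
  have hD := enormD2 (y j.+1 - x j.+1) (x j.+1 - u).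
  rewrite -e3 e1 enormZ2 in hD.
  have N2 : enorm (x j.+1 - u) ^+ 2 = a ^+ 2 * enorm (xo j.+1 - xbar) ^+ 2 by rewrite e2 enormZ2.
  rewrite -/a in hk.
  rewrite (enorm_sym (x j.+1)) in hk.
  have LE : L j.+1 = B j.+1 + rho j.+1 by [].
  set pw := powR _ _ in hk.
  set Kj := C + Rk E0 p j.
  have hRk : Rk E0 p j.+1 = Rk E0 p j + E0 * pw.
    by rewrite /Rk big_nat_recr //= /pw; ring.
  rewrite hRk.
  have h1 : P j.+1 <= (1 - a) * (f (x j) + gr (x j) - (f xbar + gr xbar))
      + a ^+ 2 * L j.+1 / 2 * enorm (xo j - xbar) ^+ 2 + E0 * (a ^+ 2 * L j.+1 / L 0%N) * pw.
    rewrite /P -/a (enorm_sym xbar).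
    have hI : inner (y j.+1 - x j.+1) (x j.+1 - u) = (a ^+ 2 * enorm (xo j - xbar) ^+ 2
       - enorm (y j.+1 - x j.+1) ^+ 2 - a ^+ 2 * enorm (xo j.+1 - xbar) ^+ 2) / 2 by lra.
    rewrite hI in hk.
    rewrite LE in hk *.
    lra.
  have Lj := Lpos j; have L0p := Lpos 0%N; have aj := apos j.
  have hq : a ^+ 2 * L j.+1 = (1 - a) * (alpha j ^+ 2 * L j).
    by rewrite /a rec; field; rewrite !gt_eqF // ?mulr_gt0 // ?exprn_gt0.
  have h2 : (1 - a) * (f (x j) + gr (x j) - (f xbar + gr xbar))
      + a ^+ 2 * L j.+1 / 2 * enorm (xo j - xbar) ^+ 2 = (1 - a) * P j.
    by rewrite /P (enorm_sym xbar) hq; ring.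
  have h3 : (1 - a) * P j <= (1 - a) * (alpha j ^+ 2 * L j / L 0%N * Kj).
    by apply: ler_wpM2l => //; lra.
  have h5 : (1 - a) * (alpha j ^+ 2 * L j / L 0%N * Kj) = a ^+ 2 * L j.+1 / L 0%N * Kj.
    by rewrite hq; field; rewrite gt_eqF.
  have -> : C + (Rk E0 p j + E0 * pw) = Kj + E0 * pw by rewrite /Kj addrA.
  rewrite mulrDr.
  lra.
rewrite /F (gfin _ (gx k)) (gfin _ gxbar) -!EFinD lee_fin.
have K0 : 0 <= C + Rk E0 p k.
  apply: addr_ge0; first by apply: mulr_ge0; [apply: divr_ge0; [exact: ltW|by []] | exact: exprn_ge0 (enorm_ge0 _)].
  apply: mulr_ge0; first exact: ltW.
  apply: addr_ge0 => //; apply: sumr_ge0 => l _; exact: powR_ge0.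
apply: le_trans (HP k) _.
by apply: ler_wpM2r => //; apply: beta_bound.
Qed.
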